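(* Let $\mathfrak g(t)=2+\alpha-(N+\alpha)t^{N-2}+(N-2)t^{N+\alpha}$ and $\mathfrak h(t)=\alpha-(N+\alpha)t^N+Nt^{N+\alpha}$. Then $\mathfrak g(t)>\mathfrak g(1)=0$ and $\mathfrak h(t)>\mathfrak h(1)=0$ for all $t\in[0,1)\cup(1,\infty)$. Moreover, if $V$ satisfies (V3), then for all $t\ge0$ and $x\in\mathbb R^N\setminus\{0\}$, $$(\alpha+Nt^{N+\alpha})V(x)-(N+\alpha)t^NV(tx)+(t^{N+\alpha}-1)\nabla V(x)\cdot x\ \ge\ -\frac{(N-2)^2\theta\,\mathfrak g(t)}{4|x|^2}.$$
   Context: $N\ge3$, $\alpha\in(0,N)$. (V3): $V\in C^1(\mathbb R^N,\mathbb R)$ and there is $\theta\in[0,1)$ such that for every $x\neq0$ the map $t\mapsto \frac{NV(tx)+\nabla V(tx)\cdot(tx)}{t^\alpha}+\frac{(N-2)^3\theta}{4t^{\alpha+2}|x|^2}$ is nonincreasing on $(0,\infty)$. *)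

(* Defs.v *)
From Stdlib Require Import Reals.
From mathcomp Require Import ssreflect ssrfun ssrbool eqtype ssrnat seq fintype bigop.
Open Scope R_scope.

Definition vec (N : nat) := 'I_N -> R.
Definition vzero {N : nat} : vec N := fun _ => 0.
Definition vadd {N : nat} (x y : vec N) : vec N := fun i => x i + y i.
Definition vsub {N : nat} (x y : vec N) : vec N := fun i => x i - y i.
Definition vscale {N : nat} (t : R) (x : vec N) : vec N := fun i => t * x i.
Definition dot {N : nat} (x y : vec N) : R := \big[Rplus/0]_(i < N) (x i * y i).
Definition vnorm {N : nat} (x : vec N) : R := sqrt (dot x x).

(* real power t^a for t >= 0, with the convention 0^a = 0 (used only for a > 0) *)
Definition rpow (t a : R) : R := if Rle_dec t 0 then 0 else Rpower t a.

Definition has_gradient {N : nat} (V : vec N -> R) (x g : vec N) : Prop :=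
  forall eps, 0 < eps -> exists delta, 0 < delta /\
    forall h : vec N, vnorm h < delta ->
      Rabs (V (vadd x h) - V x - dot g h) <= eps * vnorm h.

Definition vcontinuous {N M : nat} (f : vec N -> vec M) : Prop :=
  forall x eps, 0 < eps -> exists delta, 0 < delta /\
    forall y, vnorm (vsub y x) < delta -> vnorm (vsub (f y) (f x)) < eps.

Definition C1_with_grad {N : nat} (V : vec N -> R) (gradV : vec N -> vec N) : Prop :=
  (forall x, has_gradient V x (gradV x)) /\ vcontinuous gradV.

Definition V3 (N : nat) (alpha : R) (V : vec N -> R) (gradV : vec N -> vec N)
  (theta : R) : Prop :=
  0 <= theta < 1 /\
  forall x : vec N, x <> vzero ->
    let f := fun t => (INR N * V (vscale t x) + dot (gradV (vscale t x)) (vscale t x))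
                        / rpow t alpha
                      + (INR N - 2) ^ 3 * theta / (4 * rpow t (alpha + 2) * vnorm x ^ 2) in
    forall s t, 0 < s -> s <= t -> f t <= f s.

Definition gfun (N : nat) (alpha t : R) : R :=
  2 + alpha - (INR N + alpha) * t ^ (N - 2) + (INR N - 2) * rpow t (INR N + alpha).

Definition hfun (N : nat) (alpha t : R) : R :=
  alpha - (INR N + alpha) * t ^ N + INR N * rpow t (INR N + alpha).

(* Main.v *)
From Pilot Require Import Defs.
From Coquelicot Require Import Coquelicot.
From Stdlib Require Import Reals Lra Psatz FunctionalExtensionality.
From mathcomp Require Import ssreflect ssrfun ssrbool eqtype ssrnat seq fintype bigop.
From mathcomp Require Import zify.
Import Pilot.Defs.
Open Scope R_scope.

Lemma D_plus (f g : R -> R) (x a b : R) : is_derive f x a -> is_derive g x b ->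
  is_derive (fun y => f y + g y) x (a + b).
Proof. move=> H1 H2; exact: (is_derive_plus f g x a b H1 H2). Qed.
Lemma D_minus (f g : R -> R) (x a b : R) : is_derive f x a -> is_derive g x b ->
  is_derive (fun y => f y - g y) x (a - b).
Proof. move=> H1 H2; exact: (is_derive_minus f g x a b H1 H2). Qed.
Lemma D_mult (f g : R -> R) (x a b : R) : is_derive f x a -> is_derive g x b ->
  is_derive (fun y => f y * g y) x (a * g x + f x * b).
Proof. move=> H1 H2; exact: (is_derive_mult f g x a b H1 H2 Rmult_comm). Qed.
Lemma D_const (c x : R) : is_derive (fun _ => c) x 0.
Proof. exact: is_derive_const. Qed.
Lemma D_id (x : R) : is_derive (fun y => y) x 1.
Proof. exact: is_derive_id. Qed.
Lemma D_eq (f : R -> R) (x a b : R) : is_derive f x a -> a = b -> is_derive f x b.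
Proof. by move=> H <-. Qed.

Lemma rpow_pos s a : 0 < s -> rpow s a = Rpower s a.
Proof. move=> Hs; rewrite /rpow; case: Rle_dec => // H; lra. Qed.
Lemma rpow_1 a : rpow 1 a = 1.
Proof. rewrite rpow_pos; last lra. by rewrite /Rpower ln_1 Rmult_0_r exp_0. Qed.

Lemma D_rpow s a : 0 < s -> is_derive (fun t => rpow t a) s (a * Rpower s (a - 1)).
Proof.
move=> Hs.
apply: (is_derive_ext_loc (fun t => Rpower t a)).
  apply: (filter_imp (fun t => 0 < t)); last exact: (open_gt 0 s Hs).
  by move=> t Ht; rewrite rpow_pos.
apply/is_derive_Reals; exact: derivable_pt_lim_power.
Qed.


Lemma dot_scale_r N (g x : vec N) h : dot g (vscale h x) = h * dot g x.
Proof.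
rewrite /dot /vscale.
apply: (big_ind2 (fun a b => a = h * b)); first by ring.
  by move=> a1 a2 b1 b2 -> ->; ring.
by move=> i _; ring.
Qed.

Lemma dot_self_ge0 N (x : vec N) : 0 <= dot x x.
Proof.
rewrite /dot; apply: (big_ind (fun a => 0 <= a)); first lra.
  by move=> a b Ha Hb; lra.
by move=> i _; nra.
Qed.

Lemma vnorm_scale N (x : vec N) h : vnorm (vscale h x) = Rabs h * vnorm x.
Proof.
rewrite /vnorm.
have -> : dot (vscale h x) (vscale h x) = (h * h) * dot x x.
  rewrite dot_scale_r.
  have -> : dot (vscale h x) x = h * dot x x.
    rewrite /dot /vscale.
    apply: (big_ind2 (fun a b => a = h * b)); first by ring.
      by move=> a1 a2 b1 b2 -> ->; ring.
    by move=> i _; ring.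
  ring.
rewrite sqrt_mult; [|nra|exact: dot_self_ge0].
by rewrite -sqrt_Rsqr_abs.
Qed.

Lemma big_sq_ge N (x : vec N) (r : seq 'I_N) i : i \in r ->
  x i * x i <= \big[Rplus/0]_(j <- r) (x j * x j).
Proof.
elim: r => [//|j r IH]; rewrite in_cons big_cons => /orP [/eqP ->|Hi].
  have : 0 <= \big[Rplus/0]_(j <- r) (x j * x j).
    apply: (big_ind (fun a => 0 <= a)); first lra.
      by move=> a b Ha Hb; lra.
    by move=> k _; nra.
  nra.
have := IH Hi; nra.
Qed.

Lemma vnorm_pos N (x : vec N) : x <> vzero -> 0 < vnorm x.
Proof.
move=> Hx.
have [i Hi] : exists i, x i <> 0.
  apply: Classical_Prop.NNPP => H; apply: Hx; apply: functional_extensionality => i.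
  apply: Classical_Prop.NNPP => H2; apply: H; by exists i.
apply: sqrt_lt_R0.
have := @big_sq_ge N x (index_enum 'I_N) i (mem_index_enum i).
rewrite /dot => H; apply: (Rlt_le_trans _ (x i * x i)); first nra.
exact: H.
Qed.

Lemma vadd_scale N (x : vec N) s h : vadd (vscale s x) (vscale h x) = vscale (s + h) x.
Proof. apply: functional_extensionality => i; rewrite /vadd /vscale; ring. Qed.

Lemma vscale1 N (x : vec N) : vscale 1 x = x.
Proof. apply: functional_extensionality => i; rewrite /vscale; ring. Qed.



Lemma D_line N (V : vec N -> R) (g : vec N) (x : vec N) s :
  has_gradient V (vscale s x) g ->
  is_derive (fun u => V (vscale u x)) s (dot g x).
Proof.
move=> HG; apply/is_derive_Reals => eps Heps.
set nx := vnorm x.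
have Hnx : 0 <= nx by rewrite /nx /vnorm; apply: sqrt_pos.
have [d [Hd Hh]] := HG (eps / (2 * (nx + 1))) ltac:(apply: Rdiv_lt_0_compat; lra).
have Hd' : 0 < d / (nx + 1) by apply: Rdiv_lt_0_compat; lra.
exists (mkposreal _ Hd') => h Hh0 Hhd /=.
have Hn : vnorm (vscale h x) < d.
  rewrite vnorm_scale.
  have Hha : 0 < Rabs h by apply: Rabs_pos_lt.
  have : Rabs h * (nx + 1) < d.
    simpl in Hhd. have := Rmult_lt_compat_r (nx+1) _ _ ltac:(lra) Hhd.
    by rewrite /Rdiv Rmult_assoc Rinv_l; [rewrite Rmult_1_r|lra].
  rewrite -/nx; nra.
have H := Hh _ Hn.
rewrite vadd_scale dot_scale_r vnorm_scale -/nx in H.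
have Hha : 0 < Rabs h by apply: Rabs_pos_lt.
have -> : (V (vscale (s + h) x) - V (vscale s x)) / h - dot g x
   = (V (vscale (s + h) x) - V (vscale s x) - h * dot g x) / h by field.
rewrite Rabs_div //.
apply: (Rle_lt_trans _ (eps / (2 * (nx + 1)) * nx)).
  apply/Rle_div_l => //.
  apply: (Rle_trans _ _ _ H); right; ring.
have -> : eps / (2 * (nx + 1)) * nx = eps * (nx / (2 * (nx + 1))) by field; lra.
have : nx / (2 * (nx + 1)) < 1.
  apply/Rlt_div_l; lra.
have : 0 <= nx / (2 * (nx + 1)) by apply: Rdiv_le_0_compat; lra.
nra.
Qed.


Lemma Rpower_split s k b : 0 < s -> Rpower s (INR k + b) = s ^ k * Rpower s b.
Proof. move=> Hs; by rewrite Rpower_plus Rpower_pow. Qed.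

Lemma Rpower1 a : Rpower 1 a = 1.
Proof. by rewrite /Rpower ln_1 Rmult_0_r exp_0. Qed.

Lemma Rpower_lt1 s a : 0 < a -> 0 < s < 1 -> Rpower s a < 1.
Proof. move=> Ha Hs; rewrite -(Rpower1 a); apply: Rlt_Rpower_l; lra. Qed.
Lemma Rpower_gt1 s a : 0 < a -> 1 < s -> 1 < Rpower s a.
Proof. move=> Ha Hs; rewrite -(Rpower1 a); apply: Rlt_Rpower_l; lra. Qed.

Section G.
Variables (N : nat) (alpha : R).
Hypothesis HN : (3 <= N)%coq_nat.
Hypothesis Ha : 0 < alpha.

Lemma INR_N2 : INR (N - 2) = INR N - 2.
Proof. rewrite minus_INR; [by []|lia]. Qed.

Lemma expo3 : INR N + alpha - 1 = INR (N - 3) + (alpha + 2).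
Proof. rewrite minus_INR; [simpl; ring|lia]. Qed.
Lemma expo1 : INR N + alpha - 1 = INR (N - 1) + alpha.
Proof. rewrite minus_INR; [simpl; ring|lia]. Qed.

Lemma D_g s : 0 < s -> is_derive (gfun N alpha) s
  ((INR N - 2) * (INR N + alpha) * s ^ (N - 3) * (Rpower s (alpha + 2) - 1)).
Proof.
move=> Hs; rewrite /gfun.
apply: D_eq.
  apply: D_plus; first apply: D_minus; first exact: D_const.
    apply: is_derive_scal; apply: is_derive_pow; exact: D_id.
  apply: is_derive_scal; exact: D_rpow.
rewrite expo3 Rpower_split // INR_N2.
have -> : Init.Nat.pred (N - 2) = (N - 3)%nat by lia.
ring.
Qed.

Lemma D_h s : 0 < s -> is_derive (hfun N alpha) s
  (INR N * (INR N + alpha) * s ^ (N - 1) * (Rpower s alpha - 1)).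
Proof.
move=> Hs; rewrite /hfun.
apply: D_eq.
  apply: D_plus; first apply: D_minus; first exact: D_const.
    apply: is_derive_scal; apply: is_derive_pow; exact: D_id.
  apply: is_derive_scal; exact: D_rpow.
rewrite expo1 Rpower_split //.
have -> : Init.Nat.pred N = (N - 1)%nat by lia.
ring.
Qed.

Lemma part1 : gfun N alpha 1 = 0 /\ hfun N alpha 1 = 0 /\
   forall t, 0 <= t -> t <> 1 ->
     gfun N alpha t > gfun N alpha 1 /\ hfun N alpha t > hfun N alpha 1.
Proof.
have HN3 : 3 <= INR N by have := le_INR 3 N HN; simpl; lra.
have g1 : gfun N alpha 1 = 0 by rewrite /gfun rpow_1 pow1; ring.
have h1 : hfun N alpha 1 = 0 by rewrite /hfun rpow_1 pow1; ring.
split => //; split => //.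
move=> t Ht Ht1; rewrite g1 h1.
case: (Req_dec t 0) => [->|Ht0].
  rewrite /gfun /hfun.
  have -> : rpow 0 (INR N + alpha) = 0 by rewrite /rpow; case: (Rle_dec 0 0) => // H; exfalso; apply: H; lra.
  rewrite !pow_i; [|lia|lia]. lra.
have Htp : 0 < t by lra.
have HA : 0 < (INR N - 2) * (INR N + alpha) by nra.
have HB : 0 < INR N * (INR N + alpha) by nra.
case: (Rlt_le_dec t 1) => Hlt.
- split.
  + have [c [Hc Hcb]] := MVT_cor2 (gfun N alpha)
      (fun s => (INR N - 2) * (INR N + alpha) * s ^ (N - 3) * (Rpower s (alpha + 2) - 1)) t 1 Hlt
      (fun c Hc => proj1 (is_derive_Reals _ _ _) (D_g c ltac:(lra))).
    have H1 := Rpower_lt1 c (alpha + 2) ltac:(lra) ltac:(lra).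
    have H2 := pow_lt c (N - 3) ltac:(lra).
    rewrite g1 in Hc.
    have H3 : 0 < (INR N - 2) * (INR N + alpha) * c ^ (N - 3) by nra.
    cbv beta in Hc.
    match type of Hc with _ = ?D * _ => have HD : D < 0 by nra end.
    nra.
  + have [c [Hc Hcb]] := MVT_cor2 (hfun N alpha)
      (fun s => INR N * (INR N + alpha) * s ^ (N - 1) * (Rpower s alpha - 1)) t 1 Hlt
      (fun c Hc => proj1 (is_derive_Reals _ _ _) (D_h c ltac:(lra))).
    have H1 := Rpower_lt1 c alpha ltac:(lra) ltac:(lra).
    have H2 := pow_lt c (N - 1) ltac:(lra).
    rewrite h1 in Hc.
    have H3 : 0 < INR N * (INR N + alpha) * c ^ (N - 1) by nra.
    cbv beta in Hc.
    match type of Hc with _ = ?D * _ => have HD : D < 0 by nra end.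
    nra.
- have Hgt : 1 < t by lra.
  split.
  + have [c [Hc Hcb]] := MVT_cor2 (gfun N alpha)
      (fun s => (INR N - 2) * (INR N + alpha) * s ^ (N - 3) * (Rpower s (alpha + 2) - 1)) 1 t Hgt
      (fun c Hc => proj1 (is_derive_Reals _ _ _) (D_g c ltac:(lra))).
    have H1 := Rpower_gt1 c (alpha + 2) ltac:(lra) ltac:(lra).
    have H2 := pow_lt c (N - 3) ltac:(lra).
    rewrite g1 in Hc.
    have H3 : 0 < (INR N - 2) * (INR N + alpha) * c ^ (N - 3) by nra.
    cbv beta in Hc.
    match type of Hc with _ = ?D * _ => have HD : 0 < D by nra end.
    nra.
  + have [c [Hc Hcb]] := MVT_cor2 (hfun N alpha)
      (fun s => INR N * (INR N + alpha) * s ^ (N - 1) * (Rpower s alpha - 1)) 1 t Hgt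
      (fun c Hc => proj1 (is_derive_Reals _ _ _) (D_h c ltac:(lra))).
    have H1 := Rpower_gt1 c alpha ltac:(lra) ltac:(lra).
    have H2 := pow_lt c (N - 1) ltac:(lra).
    rewrite h1 in Hc.
    have H3 : 0 < INR N * (INR N + alpha) * c ^ (N - 1) by nra.
    cbv beta in Hc.
    match type of Hc with _ = ?D * _ => have HD : 0 < D by nra end.
    nra.
Qed.
End G.


Lemma C_plus (f g : R -> R) x : continuous f x -> continuous g x ->
  continuous (fun y => f y + g y) x.
Proof. move=> H1 H2; exact: (continuous_plus f g x H1 H2). Qed.
Lemma C_minus (f g : R -> R) x : continuous f x -> continuous g x ->
  continuous (fun y => f y - g y) x.
Proof. move=> H1 H2; exact: (continuous_minus f g x H1 H2). Qed.
Lemma C_mult (f g : R -> R) x : continuous f x -> continuous g x ->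
  continuous (fun y => f y * g y) x.
Proof. move=> H1 H2; exact: (continuous_mult f g x H1 H2). Qed.
Lemma C_der (f : R -> R) x l : is_derive f x l -> continuous f x.
Proof. move=> H; apply: ex_derive_continuous; by exists l. Qed.

Lemma rpow_le0 s a : s <= 0 -> rpow s a = 0.
Proof. move=> Hs; rewrite /rpow; case: Rle_dec => // H; lra. Qed.

Lemma C_rpow0 a : 1 < a -> continuous (fun s => rpow s a) 0.
Proof.
move=> Ha; apply/continuity_pt_filterlim/continuity_pt_locally => eps.
have He : 0 < Rmin 1 eps by apply: Rmin_pos; [lra|apply: cond_pos].
exists (mkposreal _ He) => y Hy.
have Hy' : Rabs y < Rmin 1 eps.
  move: Hy; rewrite /ball /= /AbsRing_ball /abs /minus /plus /opp /=.
  by rewrite Ropp_0 Rplus_0_r.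
have H1 := Rmin_l 1 eps. have H2 := Rmin_r 1 eps.
rewrite (rpow_le0 0 a); last lra.
case: (Rle_dec y 0) => Hy0.
  rewrite rpow_le0 //. rewrite Rminus_0_r Rabs_R0; apply: cond_pos.
have Hyp : 0 < y by lra.
rewrite rpow_pos // Rminus_0_r.
have -> : a = 1 + (a - 1) by ring.
rewrite Rpower_plus Rpower_1 //.
have := Rpower_lt1 y (a - 1) ltac:(lra) ltac:(split; [lra|]; move: Hy'; rewrite Rabs_right; lra).
have := exp_pos ((a - 1) * ln y). rewrite -/(Rpower y (a - 1)) => P1 P2.
rewrite Rabs_right; last nra.
move: Hy'; rewrite Rabs_right; nra.
Qed.

Lemma limit_le (f : R -> R) M : continuous f 0 -> (forall t, 0 < t < 1 -> f t <= M) ->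
  f 0 <= M.
Proof.
move=> Hc Hb; apply: Rnot_lt_le => Hlt.
have Hep : 0 < f 0 - M by lra.
have := proj1 (continuity_pt_locally f 0) (proj2 (continuity_pt_filterlim f 0) Hc) (mkposreal _ Hep).
case=> d Hd.
set t := Rmin (d / 2) (1 / 2).
have Ht : 0 < t by apply: Rmin_pos; have := cond_pos d; lra.
have Ht1 : t < 1 by have := Rmin_r (d / 2) (1 / 2); rewrite -/t; lra.
have Htd : t < d by have := Rmin_l (d / 2) (1 / 2); rewrite -/t; have := cond_pos d; lra.
have := Hd t.
rewrite /ball /= /AbsRing_ball /abs /minus /plus /opp /= Ropp_0 Rplus_0_r Rabs_right; last lra.
move=> /(_ Htd) /=.
have := Hb t (conj Ht Ht1).
move=> H1 H2; move: H2; rewrite Rabs_left1 ; lra.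
Qed.


Section P2.
Variables (N : nat) (alpha : R) (V : vec N -> R) (gradV : vec N -> vec N) (theta : R) (x : vec N).
Hypothesis HN : (3 <= N)%coq_nat.
Hypothesis Ha : 0 < alpha.
Hypothesis HC : C1_with_grad V gradV.
Hypothesis Hx : x <> vzero.

Definition fV s := (INR N * V (vscale s x) + dot (gradV (vscale s x)) (vscale s x))
                        / rpow s alpha
                      + (INR N - 2) ^ 3 * theta / (4 * rpow s (alpha + 2) * vnorm x ^ 2).
Definition KK := (INR N - 2) ^ 3 * theta / (4 * vnorm x ^ 2).
Definition DD s := dot (gradV (vscale s x)) x.
Definition Phi s := s ^ N * V (vscale s x) - fV 1 * rpow s (INR N + alpha) / (INR N + alpha)
   + KK / (INR N - 2) * s ^ (N - 2).
Definition dPhi s := INR N * s ^ (N - 1) * V (vscale s x) + s ^ N * DD s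
   - fV 1 * Rpower s (INR N + alpha - 1) + KK * s ^ (N - 3).

Lemma HN3 : 3 <= INR N.
Proof. by have := le_INR 3 N HN; simpl; lra. Qed.
Lemma nx_pos : 0 < vnorm x ^ 2.
Proof. have := @vnorm_pos N x Hx; nra. Qed.

Lemma fV1 : fV 1 = INR N * V x + DD 1 + KK.
Proof.
rewrite /fV /DD /KK !rpow_1 dot_scale_r vscale1.
have := nx_pos; have := @vnorm_pos N x Hx; move=> H H0; field; repeat split; nra.
Qed.

Lemma D_Phi s : 0 < s -> is_derive Phi s (dPhi s).
Proof.
move=> Hs; rewrite /Phi.
apply: D_eq.
  apply: D_plus; first apply: D_minus.
  - apply: D_mult; first (apply: is_derive_pow; exact: D_id).
    apply: D_line; exact: (proj1 HC).
  - apply: (is_derive_ext (fun t => (fV 1 / (INR N + alpha)) * rpow t (INR N + alpha))).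
      by move=> t /=; rewrite /Rdiv; ring.
    apply: is_derive_scal; exact: D_rpow.
  - apply: is_derive_scal; apply: is_derive_pow; exact: D_id.
rewrite /dPhi /DD.
have H3 := HN3.
rewrite INR_N2 //.
have -> : Init.Nat.pred (N - 2) = (N - 3)%nat by lia.
have -> : Init.Nat.pred N = (N - 1)%nat by lia.
field; lra.
Qed.

Lemma dPhi_eq s : 0 < s -> dPhi s = Rpower s (INR N + alpha - 1) * (fV s - fV 1).
Proof.
move=> Hs.
rewrite /dPhi fV1 //.
rewrite /fV /DD (rpow_pos s alpha Hs) (rpow_pos s (alpha + 2) Hs) dot_scale_r.
rewrite (expo1 N alpha HN) Rpower_split //.
have -> : Rpower s (alpha + 2) = Rpower s alpha * s ^ 2.
  by rewrite Rplus_comm (Rpower_split s 2) // Rmult_comm.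
have -> : s ^ (N - 1) = s ^ (N - 3) * s ^ 2 by rewrite -pow_add; f_equal; lia.
have -> : s ^ N = s ^ (N - 3) * s ^ 3 by rewrite -pow_add; f_equal; lia.
have HR : 0 < Rpower s alpha by apply: exp_pos.
have Hq : 0 < s ^ (N - 3) by apply: pow_lt.
have := nx_pos => Hn.
rewrite /KK.
have := @vnorm_pos N x Hx => Hv.
field; repeat split; nra.
Qed.

Hypothesis HV : forall s t, 0 < s -> s <= t -> fV t <= fV s.

Lemma Phi_le_pos t : 0 < t -> Phi t <= Phi 1.
Proof.
move=> Ht.
case: (Rtotal_order t 1) => [Hlt|[->|Hgt]]; last 2 first.
- lra.
- have [c [Hc Hcb]] := MVT_cor2 Phi dPhi 1 t Hgt
    (fun c Hc => proj1 (is_derive_Reals _ _ _) (D_Phi c ltac:(lra))).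
  rewrite dPhi_eq in Hc; last lra.
  have := HV 1 c ltac:(lra) ltac:(lra).
  have : 0 < Rpower c (INR N + alpha - 1) by apply: exp_pos.
  move=> HP Hf.
  move: Hc; set Q := Rpower c (INR N + alpha - 1) * (fV c - fV 1) => Hc.
  have HQ : Q <= 0 by rewrite /Q; nra.
  clearbody Q; nra.
- have [c [Hc Hcb]] := MVT_cor2 Phi dPhi t 1 Hlt
    (fun c Hc => proj1 (is_derive_Reals _ _ _) (D_Phi c ltac:(lra))).
  rewrite dPhi_eq in Hc; last lra.
  have := HV c 1 ltac:(lra) ltac:(lra).
  have : 0 < Rpower c (INR N + alpha - 1) by apply: exp_pos.
  move=> HP Hf.
  move: Hc; set Q := Rpower c (INR N + alpha - 1) * (fV c - fV 1) => Hc.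
  have HQ : 0 <= Q by rewrite /Q; nra.
  clearbody Q; nra.
Qed.

Lemma Phi_cont0 : continuous Phi 0.
Proof.
rewrite /Phi.
apply: C_plus; first apply: C_minus.
- apply: C_der. apply: D_mult; first (apply: is_derive_pow; exact: D_id).
  apply: D_line; exact: (proj1 HC).
- apply: (continuous_ext (fun t => (fV 1 / (INR N + alpha)) * rpow t (INR N + alpha))).
    by move=> t /=; rewrite /Rdiv; ring.
  apply: C_mult; first exact: continuous_const.
  apply: C_rpow0; have := HN3; lra.
- apply: C_der; apply: is_derive_scal; apply: is_derive_pow; exact: D_id.
Qed.

Lemma Phi_le t : 0 <= t -> Phi t <= Phi 1.
Proof.
move=> Ht; case: (Req_dec t 0) => [->|Ht0]; last by apply: Phi_le_pos; lra.
apply: limit_le; first exact: Phi_cont0.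
move=> s Hs; apply: Phi_le_pos; lra.
Qed.

Lemma final t : 0 <= t ->
       (alpha + INR N * rpow t (INR N + alpha)) * V x
       - (INR N + alpha) * t ^ N * V (vscale t x)
       + (rpow t (INR N + alpha) - 1) * dot (gradV x) x
       >= - ((INR N - 2) ^ 2 * theta * gfun N alpha t) / (4 * vnorm x ^ 2).
Proof.
move=> Ht.
have H := Phi_le t Ht.
move: H; rewrite /Phi fV1 // rpow_1 !pow1 vscale1 /DD vscale1 /gfun /KK => H.
have H3 := HN3. have Hn := nx_pos. have Hv := @vnorm_pos N x Hx.
set P := rpow t (INR N + alpha) in H *.
set T := t ^ (N - 2) in H *.
set W := V (vscale t x) in H *.
set tN := t ^ N in H *.
set D1 := dot (gradV x) x in H *.
set n2 := vnorm x ^ 2 in H Hn *.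
apply: Rle_ge.
have E : (alpha + INR N * P) * V x - (INR N + alpha) * tN * W + (P - 1) * D1
   - (- ((INR N - 2) ^ 2 * theta * (2 + alpha - (INR N + alpha) * T + (INR N - 2) * P)) / (4 * n2))
   = (INR N + alpha) * ((1 * V x - (INR N * V x + D1 + (INR N - 2) ^ 3 * theta / (4 * n2)) * 1 / (INR N + alpha)
   + (INR N - 2) ^ 3 * theta / (4 * n2) / (INR N - 2) * 1)
   - (tN * W - (INR N * V x + D1 + (INR N - 2) ^ 3 * theta / (4 * n2)) * P / (INR N + alpha)
   + (INR N - 2) ^ 3 * theta / (4 * n2) / (INR N - 2) * T)).
  field; repeat split; lra.
have : 0 <= (INR N + alpha) * ((1 * V x - (INR N * V x + D1 + (INR N - 2) ^ 3 * theta / (4 * n2)) * 1 / (INR N + alpha)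
   + (INR N - 2) ^ 3 * theta / (4 * n2) / (INR N - 2) * 1)
   - (tN * W - (INR N * V x + D1 + (INR N - 2) ^ 3 * theta / (4 * n2)) * P / (INR N + alpha)
   + (INR N - 2) ^ 3 * theta / (4 * n2) / (INR N - 2) * T)).
  apply: Rmult_le_pos; lra.
lra.
Qed.
End P2.


Theorem lemma2p1 (N : nat) (alpha : R) (HN : (3 <= N)%coq_nat)
  (Halpha : 0 < alpha < INR N) :
  (gfun N alpha 1 = 0 /\ hfun N alpha 1 = 0 /\
   forall t, 0 <= t -> t <> 1 ->
     gfun N alpha t > gfun N alpha 1 /\ hfun N alpha t > hfun N alpha 1) /\
  (forall (V : vec N -> R) (gradV : vec N -> vec N) (theta : R),
     C1_with_grad V gradV -> V3 N alpha V gradV theta ->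
     forall (t : R) (x : vec N), 0 <= t -> x <> vzero ->
       (alpha + INR N * rpow t (INR N + alpha)) * V x
       - (INR N + alpha) * t ^ N * V (vscale t x)
       + (rpow t (INR N + alpha) - 1) * dot (gradV x) x
       >= - ((INR N - 2) ^ 2 * theta * gfun N alpha t) / (4 * vnorm x ^ 2)).
Proof.
split; first exact: (part1 N alpha HN (proj1 Halpha)).
move=> V gradV theta HC [Hth HV3] t x Ht Hx.
exact: (final N alpha V gradV theta x HN (proj1 Halpha) HC Hx (HV3 x Hx) t Ht).
Qed.
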